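(* Let $T$ be an admissible LCA-tree and $z$ a positive integer. Then for every non-root node $\eta$ of $T$, \[ 0\le \mathrm{CostDecrease}(\eta,z)\le \mathrm{CostDecrease}(\mathrm{parent}(\eta),z). \] Consequently, the tree $T'$ obtained from $T$ by replacing each node value $d(\eta)$ with $\mathrm{CostDecrease}(\eta,z)$ is again an admissible LCA-tree (with value $+\infty$ at the root), so its LCA-distances form a relaxed ultrametric on the leaves.
   Context: An LCA-tree is a finite rooted tree $T$ in which every node $\eta$ (leaves included) carries a value $d(\eta)$; for leaves $\ell_i,\ell_j$, $d(\ell_i,\ell_j)=d(\ell_i\lor\ell_j)$ (lowest common ancestor, with $\ell\lor\ell=\ell$). It is admissible if $d(\eta)\ge0$ for all nodes and $d(\eta)\le d(\mathrm{parent}(\eta))$ for every non-root node. A relaxed ultrametric is a symmetric $d:L\times L\to\mathbb{R}_{\ge0}$ (here allowing $+\infty$ as a value) satisfying $d(x,z)\le\max(d(x,y),d(y,z))$ for all $x,y,z$, with $d(x,x)$ possibly nonzero. $T[\eta]$ is the subtree rooted at $\eta$ and $|T[\eta]|$ its number of leaves. For a set $\mathbf{C}$ of leaves of a tree $S$, $\mathrm{Cost}_z(S,\mathbf{C})=\sum_{\ell\text{ leaf of }S}\min_{c\in\mathbf{C}} d(\ell,c)^z$. A corresponding $z$-center of $\eta$ is a leaf $c_z(\eta)$ of $T[\eta]$ minimizing $\mathrm{Cost}_z(T[\eta],\{c\})$ over leaves $c$ of $T[\eta]$. For a non-root node $\eta$, $\mathrm{CostDecrease}(\eta,z)=|T[\eta]|\cdot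 d(\mathrm{parent}(\eta))^z-\mathrm{Cost}_z(T[\eta],\{c_z(\eta)\})$ (this does not depend on which minimizer $c_z(\eta)$ is chosen); for the root, $\mathrm{CostDecrease}=+\infty$. *)

(* Defs.v *)
From HB Require Import structures.
From mathcomp Require Import all_boot all_order all_algebra.
From mathcomp Require Import constructive_ereal.
Set Implicit Arguments. Unset Strict Implicit. Unset Printing Implicit Defensive.
Import Order.TTheory GRing.Theory Num.Theory.
Local Open Scope ring_scope.

Section LCATree.
Variables (V : finType) (parent : V -> V) (root : V).

(* well-formedness: the root is its own parent and every node reaches
   the root by iterating parent (hence acyclic, connected, rooted). *)
Definition is_rooted_tree : Prop :=
  parent root = root /\ forall v : V, fconnect parent v root.

(* u is an ancestor of v (v is in T[u]); reflexive *)
Definition ancestor (u v : V) : bool := fconnect parent v u.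

Definition is_leaf (v : V) : bool :=
  [forall w, (parent w == v) ==> (w == v)].

Definition subtree_leaves (eta : V) : {set V} :=
  [set l | is_leaf l && ancestor eta l].

Definition nb_anc (u : V) : nat := #|[set w | ancestor w u]|.

Definition lca (x y : V) : V :=
  Order.arg_max root (fun u => ancestor u x && ancestor u y) nb_anc.

Variables (R : realFieldType).

Definition admissible (d : V -> R) : Prop :=
  (forall v, 0 <= d v) /\ (forall v, v != root -> d v <= d (parent v)).

Definition admissibleE (d : V -> \bar R) : Prop :=
  (forall v, (0 <= d v)%E) /\ (forall v, v != root -> (d v <= d (parent v))%E).

Variables (d : V -> R) (z : nat).

Definition cost1 (eta c : V) : R :=
  \sum_(l in subtree_leaves eta) d (lca l c) ^+ z.

Definition zcenter (eta : V) : V :=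
  Order.arg_min eta (fun c => c \in subtree_leaves eta) (cost1 eta).

Definition CostDecrease (eta : V) : \bar R :=
  if eta == root then +oo%E
  else ((#|subtree_leaves eta|%:R * d (parent eta) ^+ z
         - cost1 eta (zcenter eta))%:E)%E.

End LCATree.

Definition relaxed_ultrametric (V : Type) (R : realFieldType) (P : V -> bool)
    (D : V -> V -> \bar R) : Prop :=
  (forall x y, P x -> P y -> (0 <= D x y)%E /\ D x y = D y x) /\
  (forall x y w, P x -> P y -> P w -> (D x w <= Order.max (D x y) (D y w))%E).

(* Main.v *)
Require Import Defs.
From HB Require Import structures.
From mathcomp Require Import all_boot all_order all_algebra.
From mathcomp Require Import constructive_ereal lra.
Import Order.TTheory GRing.Theory Num.Theory.
Set Implicit Arguments. Unset Strict Implicit.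
Local Open Scope ring_scope.

Section Tree.
Variables (V : finType) (parent : V -> V) (root : V).
Hypothesis Hroot : parent root = root.
Hypothesis Hreach : forall v, fconnect parent v root.

Local Notation anc := (ancestor parent).

Lemma iter_root n : iter n parent root = root.
Proof. by elim: n => //= n ->. Qed.

Lemma ancP u v : anc u v -> exists n, iter n parent v = u.
Proof. by move=> H; exists (findex parent v u); apply: iter_findex. Qed.

Lemma anc_iter n v : anc (iter n parent v) v.
Proof. exact: fconnect_iter. Qed.

Lemma anc_refl v : anc v v.
Proof. exact: connect0. Qed.

Lemma anc_trans u v w : anc u v -> anc v w -> anc u w.
Proof. by rewrite /ancestor => H1 H2; apply: connect_trans H2 H1. Qed.

Lemma anc_parent v : anc (parent v) v.
Proof. exact: (anc_iter 1). Qed.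

Lemma anc_root v : anc root v.
Proof. exact: Hreach. Qed.

Lemma anc_antisym u v : anc u v -> anc v u -> u = v.
Proof.
move=> /ancP [a Ha] /ancP [b Hb].
have Hv : iter (b + a) parent v = v by rewrite iterD Ha Hb.
have Hn : forall n, iter (n * (b + a)) parent v = v.
  by elim=> // n IH; rewrite mulSn iterD IH Hv.
case: (posnP (b + a)) => [/eqP|Hpos].
  by rewrite addn_eq0 => /andP[_ /eqP a0]; rewrite -Ha a0.
have [k Hk] := ancP (anc_root v).
have Hvr : v = root.
  rewrite -(Hn k) -(subnK (leq_pmulr k Hpos)) iterD Hk; exact: iter_root.
by rewrite -Ha Hvr iter_root.
Qed.

Lemma anc_total x u w : anc u x -> anc w x -> anc u w || anc w u.
Proof.
move=> /ancP [a <-] /ancP [b <-].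
case: (leqP a b) => Hab.
  by rewrite -(subnK Hab) iterD anc_iter orbT.
by rewrite -(subnK (ltnW Hab)) iterD anc_iter.
Qed.

Lemma nb_anc_lt u v : anc u v -> u != v -> (nb_anc parent u < nb_anc parent v)%N.
Proof.
move=> Huv Hne; apply: proper_card; apply/properP; split.
  by apply/subsetP => w; rewrite !inE => Hw; apply: anc_trans Hw Huv.
exists v; rewrite !inE ?anc_refl //.
apply/negP => Hvu; move: Hne; by rewrite (anc_antisym Huv Hvu) eqxx.
Qed.

Lemma lca_spec x y :
  [/\ anc (lca parent root x y) x, anc (lca parent root x y) y &
      forall u, anc u x -> anc u y -> anc u (lca parent root x y)].
Proof.
rewrite /lca.
have P0 : (fun u => anc u x && anc u y) root by rewrite /= !anc_root.
case: (@arg_maxP _ _ V root (fun u => anc u x && anc u y) (nb_anc parent) P0) => m /andP[Hx Hy] Hmax.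
split => // u Hux Huy.
case/orP: (anc_total Hux Hx) => // Hmu.
case: (eqVneq m u) => [-> | Hne]; first exact: anc_refl.
have := Hmax u; rewrite Hux Huy => /(_ isT).
move=> H; have H' : (nb_anc parent u <= nb_anc parent m)%N := H.
by move: H'; rewrite leqNgt (nb_anc_lt Hmu Hne).
Qed.

Lemma leaf_exists eta : exists l, l \in subtree_leaves parent eta.
Proof.
have P0 : (anc eta) eta by exact: anc_refl.
case: (@arg_maxP _ _ V eta (anc eta) (nb_anc parent) P0) => v Hv Hmax.
exists v; rewrite inE Hv andbT.
apply/forallP => w; apply/implyP => /eqP Hw.
apply/negPn/negP => Hne.
have Hvw : anc v w by rewrite -Hw anc_parent.
have H := Hmax w (anc_trans Hv Hvw).
have H' : (nb_anc parent w <= nb_anc parent v)%N := H.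
by move: H'; rewrite leqNgt (nb_anc_lt Hvw) // eq_sym.
Qed.


Variables (R : realFieldType) (d : V -> R) (z : nat).
Hypothesis Hd0 : forall v, 0 <= d v.
Hypothesis Hdm : forall v, v != root -> d v <= d (parent v).

Local Notation L := (subtree_leaves parent).
Local Notation cost := (cost1 parent root d z).
Local Notation zc := (zcenter parent root d z).

Lemma d_parent v : d v <= d (parent v).
Proof. by case: (eqVneq v root) => [->|/Hdm //]; rewrite Hroot. Qed.

Lemma d_anc u v : anc u v -> d v ^+ z <= d u ^+ z.
Proof.
move=> /ancP [n <-]; elim: n => //= n IH.
apply: le_trans IH _; apply: lerXn2r; rewrite ?nnegrE //; exact: d_parent.
Qed.

Lemma inL l u : l \in L u -> anc u l.
Proof. by rewrite inE => /andP[]. Qed.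

Lemma L_sub eta : L eta \subset L (parent eta).
Proof.
apply/subsetP => l; rewrite !inE => /andP[-> H] /=.
exact: anc_trans (anc_parent eta) H.
Qed.

Lemma lca_bound u l c : anc u l -> anc u c ->
  d (lca parent root l c) ^+ z <= d u ^+ z.
Proof. by case: (lca_spec l c) => _ _ H Hl Hc; apply: d_anc; apply: H. Qed.

Lemma zc_spec eta : zc eta \in L eta /\
  forall c, c \in L eta -> cost eta (zc eta) <= cost eta c.
Proof.
have [l Hl] := leaf_exists eta.
have := @arg_minP _ _ V l (fun c => c \in L eta) (cost eta) Hl.
rewrite /zcenter /Order.arg_min /extremum.
case: pickP => [i _ | no] /=; case=> j Pj Hj; first by split.
have := no j; rewrite /= Pj /= => /negbT/negP; case.
by apply/forallP => k; apply/implyP => Hk; apply: Hj.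
Qed.


Lemma cost_le u w c : anc w u -> anc u c -> cost u c <= #|L u|%:R * d w ^+ z.
Proof.
move=> Hwu Huc; rewrite /cost1 mulr_natl -sumr_const; apply: ler_sum => l Hl.
apply: lca_bound; apply: anc_trans Hwu _ => //; exact: inL.
Qed.

Lemma cost_split eta c : anc eta c -> cost (parent eta) c <=
  cost eta c + #|L (parent eta) :\: L eta|%:R * d (parent eta) ^+ z.
Proof.
move=> Hc; rewrite /cost1 (big_setID (L eta)) /= (setIidPr (L_sub eta)) lerD2l.
rewrite mulr_natl -sumr_const; apply: ler_sum => l; rewrite inE => /andP[_ Hl].
apply: lca_bound; first exact: inL.
exact: anc_trans (anc_parent eta) Hc.
Qed.

Local Notation CD := (CostDecrease parent root d z).

Lemma CD_ge0 eta : (0 <= CD eta)%E.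
Proof.
rewrite /CostDecrease; case: ifP => [_|Hne]; first exact: leey.
rewrite lee_fin subr_ge0; have [Hz _] := zc_spec eta.
exact: cost_le (anc_parent eta) (inL Hz).
Qed.

Lemma CD_mono eta : (CD eta <= CD (parent eta))%E.
Proof.
case: (eqVneq eta root) => [->|Hne]; first by rewrite Hroot.
rewrite /CostDecrease (negbTE Hne).
case: (eqVneq (parent eta) root) => [Hpr|Hp].
  exact: leey.
rewrite lee_fin.
have [Hz Hmin] := zc_spec eta.
have [_ Hminp] := zc_spec (parent eta).
have Hce : zc eta \in L (parent eta) := subsetP (L_sub eta) _ Hz.
have H1 := Hminp _ Hce.
have H2 := cost_split (inL Hz).
have H3 : #|L (parent eta)| = (#|L eta| + #|L (parent eta) :\: L eta|)%N.
  by rewrite -(cardsID (L eta) (L (parent eta))) (setIidPr (L_sub eta)).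
have H4 : d (parent eta) ^+ z <= d (parent (parent eta)) ^+ z.
  by apply: d_anc; exact: anc_parent.
have H5 := ler_wpM2l (ler0n _ #|L (parent eta)|) H4.
rewrite H3 natrD in H5 *.
move: H1 H2 H5.
set a := d (parent eta) ^+ z; set b := d (parent (parent eta)) ^+ z.
set n1 := (#|L eta|)%:R; set n2 := (#|_ :\: _|)%:R.
set C1 := cost eta _; set C2 := cost (parent eta) _; set C3 := cost (parent eta) _.
nra.
Qed.

Lemma CD_anc u v : anc u v -> (CD v <= CD u)%E.
Proof.
move=> /ancP [n <-]; elim: n => //= n IH.
exact: le_trans IH (CD_mono _).
Qed.

Lemma lca_sym x y : lca parent root x y = lca parent root y x.
Proof.
case: (lca_spec x y) => Hx Hy H; case: (lca_spec y x) => Hy' Hx' H'.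
by apply: anc_antisym; [apply: H' | apply: H].
Qed.

Lemma main_sec :
  (forall eta : V, eta != root ->
     (0 <= CostDecrease parent root d z eta)%E /\
     (CostDecrease parent root d z eta
        <= CostDecrease parent root d z (parent eta))%E) /\
  admissibleE parent root (CostDecrease parent root d z) /\
  relaxed_ultrametric (is_leaf parent)
    (fun x y => CostDecrease parent root d z (lca parent root x y)).
Proof.
split; [|split; [split|split]].
- by move=> eta _; split; [exact: CD_ge0 | exact: CD_mono].
- exact: CD_ge0.
- by move=> v _; exact: CD_mono.
- by move=> x y _ _; rewrite CD_ge0 lca_sym.
move=> x y w _ _ _.
case: (lca_spec x y) => Hx1 Hy1 H1; case: (lca_spec y w) => Hy2 Hw2 H2.
case: (lca_spec x w) => _ _ H3.
rewrite le_max; case/orP: (anc_total Hy1 Hy2) => Hm.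
  by rewrite CD_anc //; apply: H3 => //; apply: anc_trans Hm Hw2.
by rewrite (@CD_anc (lca parent root y w)) ?orbT //; apply: H3 => //; apply: anc_trans Hm Hx1.
Qed.

End Tree.

Theorem mainTheorem5 (V : finType) (parent : V -> V) (root : V)
    (R : realFieldType) (d : V -> R) (z : nat) :
  is_rooted_tree parent root ->
  admissible parent root d ->
  (0 < z)%N ->
  (forall eta : V, eta != root ->
     (0 <= CostDecrease parent root d z eta)%E /\
     (CostDecrease parent root d z eta
        <= CostDecrease parent root d z (parent eta))%E) /\
  admissibleE parent root (CostDecrease parent root d z) /\
  relaxed_ultrametric (is_leaf parent)
    (fun x y => CostDecrease parent root d z (lca parent root x y)).
Proof.
by move=> [Hr Hre] [Hd0 Hdm] _; apply: main_sec.
Qed.
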